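(* Let $2\le j<k$ be integers and consider the election $E(j,k)$ and the committee $W=D_{k-2}\cup\{x,a\}$. Then (1) $\Delta(W,a,b)=\delta(j,k)$, where $\delta(j,k)=\frac{j!}{\prod_{j'=0}^{j}(k-j')}$; and (2) every voter $v$ of $E(j,k)$ satisfies $|A_v\cap W|\ge k-(j+1)$.
   Context: An approval election is a tuple $(N,C,(A_v)_{v\in N},k)$ with voters $N$, candidates $C$, ballots $A_v\subseteq C$ and target committee size $k$. The PAV score of $W\subseteq C$ is $\textsc{pavsc}(W)=\sum_{v\in N}\sum_{i=1}^{|A_v\cap W|}\frac1i$, and $\Delta(W,a,b)=\textsc{pavsc}((W\setminus\{a\})\cup\{b\})-\textsc{pavsc}(W)$. Let $D_\ell=\{d_1,\dots,d_\ell\}$ denote a set of dummy candidates ($D_0=\varnothing$, $D_\ell\subseteq D_{\ell+1}$). Elections $F(j,k)$, for $1\le j<k$, with candidate set $D_{k-1}\cup\{a,b\}$ and committee size $k$, are defined recursively. $F(1,k)$ has two voters with ballots $D_{k-1}\cup\{a\}$ and $D_{k-2}\cup\{b\}$. For $j>1$, take a copy of $F(j-1,k)$ with candidates $D_{k-1}\cup\{a_1,b_1\}$ and a copy of $F(j-1,k-1)$ with candidates $D_{k-2}\cup\{a_2,b_2\}$, with disjoint voter sets; in every ballot of the first copy replace $a_1$ by $b$ and $b_1$ by $a$, in every ballot of the second copy replace $a_2$ by $a$ and $b_2$ by $b$; $F(j,k)$ has the union of the two voter sets with these ballots, candidates $D_{k-1}\cup\{a,b\}$, and committee size $k$. The election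 $E(j,k)$ (for $2\le j<k$) is defined as follows: take two copies of $F(j-1,k-1)$ with disjoint voter sets $N_1,N_2$ and candidates $D_{k-2}\cup\{a_1,b_1\}$ and $D_{k-2}\cup\{a_2,b_2\}$ respectively; in ballots of voters in $N_1$ replace $a_1$ by $b$ and $b_1$ by $a$ and add a new candidate $x$; in ballots of voters in $N_2$ replace $a_2$ by $a$ and $b_2$ by $b$ and add a new candidate $y$. $E(j,k)$ has voters $N_1\cup N_2$, candidates $D_{k-2}\cup\{x,y,a,b\}$ and committee size $k$. *)

(* Defs.v *)
From HB Require Import structures.
From mathcomp Require Import all_boot all_order all_algebra.
Set Implicit Arguments. Unset Strict Implicit. Unset Printing Implicit Defensive.
Import Order.TTheory GRing.Theory Num.Theory.

(* Candidates: dummies d_i (i >= 1), and a, b, x, y. *)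
Inductive cand := Dum of nat | CA | CB | CX | CY.

Definition cand_eqb (c d : cand) : bool :=
  match c, d with
  | Dum i, Dum j => i == j
  | CA, CA | CB, CB | CX, CX | CY, CY => true
  | _, _ => false
  end.

Lemma cand_eqP : Equality.axiom cand_eqb.
Proof.
case=> [i||||] [j||||] /=; try by constructor.
by apply: (iffP eqP) => [->|[]].
Qed.

HB.instance Definition _ := hasDecEq.Build cand cand_eqP.

(* A ballot is the (finite) set of approved candidates, given as a list;
   an election's voters are given as a list of ballots (one per voter). *)
Definition ballot := seq cand.
Definition election := seq ballot.

Definition D (l : nat) : seq cand := [seq Dum i | i <- iota 1 l].

Definition swapab (c : cand) : cand :=
  match c with CA => CB | CB => CA | c => c end.

(* F(j,k): recursion on j; F(1,k) = two voters D_{k-1} u {a}, D_{k-2} u {b};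
   F(j,k) = (copy of F(j-1,k) with a1->b, b1->a) ++ (copy of F(j-1,k-1) with
   a2->a, b2->b). Value at j = 0 is irrelevant (never used for j >= 1). *)
Fixpoint F (j k : nat) : election :=
  match j with
  | 0 => [::]
  | j'.+1 =>
    match j' with
    | 0 => [:: CA :: D k.-1; CB :: D k.-2]
    | _ => [seq map swapab A | A <- F j' k] ++ F j' k.-1
    end
  end.

Definition E (j k : nat) : election :=
  [seq CX :: map swapab A | A <- F j.-1 k.-1] ++
  [seq CY :: A | A <- F j.-1 k.-1].

Definition inter_size (A W : seq cand) : nat :=
  size (undup [seq c <- W | c \in A]).

Local Open Scope ring_scope.

Definition harm (n : nat) : rat := \sum_(1 <= i < n.+1) (i%:R)^-1.

Definition pavsc (El : election) (W : seq cand) : rat :=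
  \sum_(A <- El) harm (inter_size A W).

Definition swap_in (W : seq cand) (a b : cand) : seq cand :=
  b :: [seq c <- W | c != a].

Definition Delta (El : election) (W : seq cand) (a b : cand) : rat :=
  pavsc El (swap_in W a b) - pavsc El W.

Definition delta (j k : nat) : rat :=
  (j`!)%:R / (\prod_(0 <= j' < j.+1) (k - j')%N)%:R.

(* Main.v *)
Require Import Defs.
From mathcomp Require Import all_boot all_order all_algebra.
From mathcomp Require Import ring lra zify.
Import Order.TTheory GRing.Theory Num.Theory.
Local Open Scope ring_scope.

Lemma delta_rec j n : (j.+1 < n)%N -> delta j.+1 n = delta j n.-1 - delta j n.
Proof.
move=> h; rewrite /delta.
have Mpos : (0 < \prod_(0 <= i < j) (n.-1 - i))%N.
  rewrite big_nat; apply: prodn_cond_gt0 => i /andP [_ hi]; lia.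
move: Mpos.
have eA : (\prod_(0<=i<j.+1) (n.-1 - i) = (\prod_(0 <= i < j) (n.-1 - i)) * (n.-1 - j))%N
  by rewrite big_nat_recr.
have eB : (\prod_(0<=i<j.+1) (n - i) = n * \prod_(0 <= i < j) (n.-1 - i))%N.
  rewrite big_nat_recl // subn0; congr (_ * _)%N; rewrite !big_nat; apply: eq_bigr => i _; lia.
have eC : (\prod_(0<=i<j.+2) (n - i) = n * (\prod_(0 <= i < j) (n.-1 - i)) * (n.-1 - j))%N.
  rewrite big_nat_recr //= eB; congr (_ * _)%N; lia.
rewrite eA eB eC; generalize (\prod_(0 <= i < j) (n.-1 - i))%N => M Mpos.
have hn : n = ((n.-1 - j) + j.+1)%N by lia.
have q0 : (0 < n.-1 - j)%N by lia.
move: q0 hn; clear eA eB eC; generalize (n.-1 - j)%N => q q0 ->.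
rewrite factS !natrM !natrD.
have hq : (q%:R : rat) != 0 by rewrite pnatr_eq0 -lt0n.
have hM : (M%:R : rat) != 0 by rewrite pnatr_eq0 -lt0n.
have hs : (q%:R + (j.+1)%:R : rat) != 0.
  by rewrite -natrD pnatr_eq0 addnS.
field.
rewrite hM hq /=.
have h1 : (0:rat) <= j%:R by rewrite ler0n.
have h2 : (0:rat) < q%:R by rewrite ltr0n.
rewrite gt_eqF //; lra.
Qed.

Definition isdum (c : cand) : bool := if c is Dum _ then true else false.

Lemma Dum_inj : injective Dum. Proof. by move=> ? ? []. Qed.

Lemma mem_D i m : (Dum i \in D m) = (0 < i <= m)%N.
Proof. by rewrite /D (mem_map Dum_inj) mem_iota; apply/idP/idP; lia. Qed.

Lemma D_dum x m : x \in D m -> isdum x.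
Proof. by case/mapP=> i _ ->. Qed.

Lemma uniq_D m : uniq (D m).
Proof. by rewrite /D (map_inj_uniq Dum_inj) iota_uniq. Qed.

Lemma notin_D c m : ~~ isdum c -> c \notin D m.
Proof. by apply: contra => /D_dum. Qed.

Lemma nD c m : ~~ isdum c -> (c \in D m) = false.
Proof. by move/notin_D/negbTE. Qed.

Lemma size_D m : size (D m) = m.
Proof. by rewrite size_map size_iota. Qed.

Lemma count_DD m n : (m <= n)%N -> count (mem (D m)) (D n) = m.
Proof.
move=> hmn.
have -> : D n = D m ++ map Dum (iota (1 + m) (n - m)) by rewrite /D -map_cat -iotaD subnKC.
rewrite count_cat (eq_in_count (a2 := predT)) ?count_predT ?size_D; last by move=> x hx; apply/idP; rewrite /= ?inE; move: hx.
rewrite (eq_in_count (a2 := pred0)) ?count_pred0 ?addn0 //.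
move=> x /mapP [i]; rewrite mem_iota => hi ->; rewrite /= mem_D; apply/negbTE; lia.
Qed.

Lemma count_hD (h : seq cand) m n : ~~ has isdum h -> (m <= n)%N ->
  count (mem (h ++ D m)) (D n) = m.
Proof.
move=> hh hmn; rewrite -[RHS](@count_DD m n hmn); apply: eq_in_count => x /D_dum hx /=.
rewrite mem_cat; case: (boolP (x \in h)) => //= xh.
by case/negP: hh; apply/hasP; exists x.
Qed.

Lemma inter_count A W : uniq W -> inter_size A W = count (mem A) W.
Proof. by move=> uW; rewrite /inter_size undup_id ?filter_uniq // size_filter. Qed.

Lemma inter_W (h : seq cand) m n : ~~ has isdum h -> (m <= n)%N ->
  inter_size (h ++ D m) (CX :: CA :: D n) = ((CX \in h) + (CA \in h) + m)%N.
Proof.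
move=> hh hmn; rewrite inter_count /=.
  by rewrite count_hD // !mem_cat !nD // !orbF addnA.
by rewrite !inE !nD // uniq_D.
Qed.

Lemma swapW n : swap_in (CX :: CA :: D n) CA CB = CB :: CX :: D n.
Proof.
rewrite /swap_in /=; congr (_ :: _ :: _); apply/all_filterP/allP => x /D_dum.
by case: x.
Qed.

Lemma inter_W' (h : seq cand) m n : ~~ has isdum h -> (m <= n)%N ->
  inter_size (h ++ D m) (swap_in (CX :: CA :: D n) CA CB) = ((CB \in h) + (CX \in h) + m)%N.
Proof.
move=> hh hmn; rewrite swapW inter_count /=.
  by rewrite count_hD // !mem_cat !nD // !orbF addnA.
by rewrite !inE !nD // uniq_D.
Qed.

Lemma harmS n : harm n.+1 = harm n + (n.+1%:R)^-1.
Proof. by rewrite /harm big_nat_recr. Qed.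

Lemma mapswapD m : map swapab (D m) = D m.
Proof. by rewrite /D -map_comp; apply: eq_map. Qed.

Lemma F_shape j k : (1 <= j)%N -> forall A, A \in F j k -> exists c m,
  [/\ A = c :: D m, c \in [:: CA; CB], (k.-1 - j <= m)%N & (m <= k.-1)%N].
Proof.
elim: j k => [|j IH] k // _ A.
case: j IH => [|j] IH.
  rewrite /= !inE => /orP [/eqP ->|/eqP ->].
    by exists CA, k.-1; split => //; lia.
  by exists CB, k.-2; split => //; lia.
rewrite [F _ _]/= mem_cat => /orP [/mapP [A' hA' ->]|hA].
  have [c [m [-> hc h1 h2]]] := IH k erefl A' hA'.
  exists (swapab c), m; rewrite /= mapswapD; split => //; try lia.
  by move: hc; rewrite !inE => /orP [/eqP ->|/eqP ->].
have [c [m [-> hc h1 h2]]] := IH k.-1 erefl A hA.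
exists c, m; split => //; lia.
Qed.

Definition sgn (A : ballot) : rat :=
  match A with CA :: _ => -1 | CB :: _ => 1 | _ => 0 end.

Definition T (El : election) (t : nat) : rat :=
  \sum_(A <- El) sgn A / (size A + t)%:R.

Lemma T_swap El t : T [seq map swapab A | A <- El] t = - T El t.
Proof.
rewrite /T big_map -sumrN; apply: eq_bigr => A _.
case: A => [|c A] /=; first by rewrite !mul0r oppr0.
by rewrite size_map; case: c => *; rewrite ?mul0r ?oppr0 ?mulN1r ?opprK ?mul1r.
Qed.

Lemma F_S j k : F j.+2 k = [seq map swapab A | A <- F j.+1 k] ++ F j.+1 k.-1.
Proof. by []. Qed.

Lemma T_F j k t : (1 <= j)%N -> (j < k)%N -> T (F j k) t = delta j (k + t).
Proof.
elim: j k => [|j IH] k // _.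
case: j IH => [|j] IH hk.
  case: k hk => [|[|k]] // _.
  rewrite /T !big_cons big_nil /= !size_D /delta !big_nat_recr //= big_nil.
  rewrite size_map size_iota subn0 addr0 mul1n.
  have -> : (k.+2 + t - 1 = k.+1 + t)%N by lia.
  rewrite natrM !addSn -!natr1.
  have h0 : (0:rat) <= (k + t)%:R by rewrite ler0n.
  field.
  by apply/andP; split; rewrite gt_eqF //; lra.
rewrite F_S /T big_cat -/(T _ t) -/(T _ t) T_swap (IH k) ?(IH k.-1) //; try lia.
rewrite (delta_rec (j.+1) (k+t)); last lia.
have -> : (k.-1 + t = (k + t).-1)%N by lia.
exact: addrC.
Qed.

Lemma harm_diff m : harm m.+1 - harm m = (m.+1%:R)^-1.
Proof. by rewrite harmS addrAC subrr add0r. Qed.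

Lemma diff1 c m n : c \in [:: CA; CB] -> (m <= n)%N ->
  harm (inter_size (CX :: map swapab (c :: D m)) (swap_in (CX :: CA :: D n) CA CB))
  - harm (inter_size (CX :: map swapab (c :: D m)) (CX :: CA :: D n))
  = - (sgn (c :: D m) / (m.+2)%:R).
Proof.
rewrite !inE => /orP [/eqP ->|/eqP ->] hmn; rewrite /= mapswapD.
  rewrite -[CX :: CB :: D m]/([:: CX; CB] ++ D m) inter_W' // inter_W //=.
  by rewrite (_ : (1+1+m = m.+2)%N) // (_ : (1+0+m = m.+1)%N) // harm_diff mulN1r opprK ?mul1r.
rewrite -[CX :: CA :: D m]/([:: CX; CA] ++ D m) inter_W' // inter_W //=.
by rewrite (_ : (1+1+m = m.+2)%N) // (_ : (0+1+m = m.+1)%N) // -opprB harm_diff ?mul1r.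
Qed.

Lemma diff2 c m n : c \in [:: CA; CB] -> (m <= n)%N ->
  harm (inter_size (CY :: c :: D m) (swap_in (CX :: CA :: D n) CA CB))
  - harm (inter_size (CY :: c :: D m) (CX :: CA :: D n))
  = sgn (c :: D m) / (m.+1)%:R.
Proof.
rewrite !inE => /orP [/eqP ->|/eqP ->] hmn.
  rewrite -[CY :: CA :: D m]/([:: CY; CA] ++ D m) inter_W' // inter_W //=.
  by rewrite (_ : (0+0+m = m)%N) // (_ : (0+1+m = m.+1)%N) // -opprB harm_diff mulN1r.
rewrite -[CY :: CB :: D m]/([:: CY; CB] ++ D m) inter_W' // inter_W //=.
by rewrite (_ : (0+0+m = m)%N) // (_ : (1+0+m = m.+1)%N) // harm_diff ?mul1r.
Qed.

Local Close Scope ring_scope.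

Theorem lemma5 (j k : nat) (hj : (2 <= j)%N) (hjk : (j < k)%N) :
  let W := CX :: CA :: D (k - 2) in
  Delta (E j k) W CA CB = delta j k /\
  (forall A, A \in E j k -> (k - j.+1 <= inter_size A W)%N).
Proof.
have [k' ek] : exists k', k = k'.+2 by exists (k - 2); lia.
have [j' ej] : exists j', j = j'.+1 by exists (j - 1); lia.
subst k j.
have -> : (k'.+2 - 2 = k')%N by lia.
move=> W; rewrite /W /E /=.
have hj' : (1 <= j')%N by lia.
split.
  rewrite /Delta /pavsc -sumrB big_cat !big_map.
  transitivity (- T (F j' k'.+1) 1 + T (F j' k'.+1) 0)%R.
    rewrite /T -sumrN; congr (_ + _)%R; apply: eq_big_seq.
      move=> A /(@F_shape _ _ hj' _) [c [m [-> hc h1 h2]]].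
      by rewrite (@diff1 _ _ _ hc) //= size_D addn1.
    move=> A /(@F_shape _ _ hj' _) [c [m [-> hc h1 h2]]].
    by rewrite (@diff2 _ _ _ hc) //= size_D addn0.
  rewrite !T_F //; try lia.
  rewrite (delta_rec j' k'.+2); last lia.
  rewrite addn1 addn0 /=; exact: addrC.
move=> A; rewrite mem_cat => /orP [/mapP [A0 /(@F_shape _ _ hj' _) [c [m [-> hc h1 h2]]] ->]
   | /mapP [A0 /(@F_shape _ _ hj' _) [c [m [-> hc h1 h2]]] ->]].
  rewrite /= mapswapD.
  rewrite -[CX :: swapab c :: D m]/([:: CX; swapab c] ++ D m) inter_W //=; last first.
    by move: hc; rewrite !inE => /orP [/eqP ->|/eqP ->].
  lia.
rewrite -[CY :: c :: D m]/([:: CY; c] ++ D m) inter_W //=; last first.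
  by move: hc; rewrite !inE => /orP [/eqP ->|/eqP ->].
lia.
Qed.
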